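(* Let $k,n$ be positive integers and $\gamma>0$. Let $\preceq_k$ be a quasi-order on $[k]=\{1,\dots,k\}$ and $\preceq$ a quasi-order on $[kn]$. Assume that there are at least $\gamma k n^k$ tuples $(s_1,\dots,s_k)\in\prod_{i=1}^k[(i-1)n+1,in]$ such that $s_i\preceq s_j\iff i\preceq_k j$ for all $i,j\in[k]$. Then there are sets $S_i\subseteq[(i-1)n+1,in]$ ($1\le i\le k$), each of size at least $\gamma n$, such that for every tuple $(s_1,\dots,s_k)\in\prod_{i=1}^k S_i$ and all $i,j\in[k]$ we have $s_i\preceq s_j\iff i\preceq_k j$.
   Context: A quasi-order here means a total preorder (a reflexive, transitive and total relation). $[a,b]$ denotes the set of integers $m$ with $a\le m\le b$. *)

(* Defs.v *)
From mathcomp Require Import all_boot all_order all_algebra.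
Set Implicit Arguments. Unset Strict Implicit. Unset Printing Implicit Defensive.

Definition quasi_order (T : finType) (le : rel T) : Prop :=
  reflexive le /\ transitive le /\ total le.

(* 0-based encoding: [k] = {1..k} is 'I_k (i <-> i+1), [kn] is 'I_(k*n)
   (m <-> m+1).  Block i (0-based) of [kn] is {i*n, ..., i*n + n - 1},
   i.e. the 0-based version of [(i-1)n+1, in] for the 1-based index i+1. *)
Definition in_block (k n : nat) (i : 'I_k) (m : 'I_(k * n)) : bool :=
  (i * n <= m) && (m < i * n + n).

Definition respects (k n : nat) (lek : rel 'I_k) (le : rel 'I_(k * n))
  (s : 'I_k -> 'I_(k * n)) : bool :=
  [forall i, forall j, le (s i) (s j) == lek i j].

Definition good_tuples (k n : nat) (lek : rel 'I_k) (le : rel 'I_(k * n))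
  : {set {ffun 'I_k -> 'I_(k * n)}} :=
  [set s : {ffun 'I_k -> 'I_(k * n)} |
     [forall i, @in_block k n i (s i)] && respects lek le s].

(* Main.v *)
Require Import Defs.
From mathcomp Require Import all_boot all_order all_algebra.
Import Order.TTheory GRing.Theory Num.Theory.

Lemma count_fix (I T : finType) (B : I -> {set T}) (i : I)
  (Z : {ffun I -> T} -> {set T}) :
  (forall (s : {ffun I -> T}) x, Z [ffun j => if j == i then x else s j] = Z s) ->
  #|[set s : {ffun I -> T} | [forall j, s j \in B j] && (s i \in Z s)]| * #|B i|
  <= \sum_(s : {ffun I -> T} | [forall j, s j \in B j]) #|Z s|.
Proof.
move=> hZ.
set F := fun s : {ffun I -> T} => [forall j, s j \in B j].
have E1 : #|[set s : {ffun I -> T} | F s && (s i \in Z s)]| * #|B i| =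
   \sum_(s | F s) \sum_(x in B i) ((s i \in Z s) : nat).
  rewrite -sum1_card big_distrl /=.
  rewrite [RHS]big_mkcond [LHS]big_mkcond /=; apply: eq_bigr => s _.
  rewrite inE sum_nat_const; case: (F s); case: (s i \in Z s) => //=; by rewrite ?mul1n ?muln0 ?muln1.
rewrite E1 (pair_big_dep (fun s => F s) (fun _ x => x \in B i)
             (fun s x => ((s i \in Z s) : nat))) /=.
pose phi := fun p : {ffun I -> T} * T =>
  ([ffun j => if j == i then p.2 else p.1 j], p.1 i).
have phiK : involutive phi.
  case=> s x; rewrite /phi /=; congr pair; last by rewrite ffunE eqxx.
  by apply/ffunP=> j; rewrite !ffunE; case: eqP => // ->.
rewrite (reindex_inj (inv_inj phiK)) /=.
have -> : \sum_(j | F (phi j).1 && ((phi j).2 \in B i)) ((phi j).1 i \in Z (phi j).1 : nat)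
   = \sum_(p | F p.1 && (p.2 \in B i)) ((p.2 \in Z p.1) : nat).
  apply: eq_big => [[s x]|[s x] _]; rewrite /phi /=; last by rewrite ffunE eqxx hZ.
  rewrite /F; apply/idP/idP.
    case/andP=> /forallP h hs; apply/andP; split; last by move: (h i); rewrite ffunE eqxx.
    apply/forallP=> j; case: (eqVneq j i) => [->//|nji]; move: (h j); rewrite ffunE.
    by rewrite (negbTE nji).
  case/andP=> /forallP h hx; apply/andP; split; last exact: h.
  by apply/forallP=> j; rewrite ffunE; case: eqP => [->//|_]; exact: h.
rewrite -(pair_big_dep (fun s => F s) (fun _ x => x \in B i)
             (fun s x => ((x \in Z s) : nat))) /=.
apply: leq_sum => s _.
rewrite big_mkcond /= -sum1_card [X in _ <= X]big_mkcond /=.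
apply: leq_sum => x _; by case: (x \in Z s); case: (x \in B i).
Qed.


Lemma rank_le {T : finType} {le : rel T} : quasi_order le ->
  forall x y, le x y = (#|[set z | le z x]| <= #|[set z | le z y]|)%N.
Proof.
case=> hr [ht htot] x y; apply/idP/idP => h.
  by apply: subset_leq_card; apply/subsetP=> z; rewrite !inE => hz; exact: ht hz h.
apply/negPn/negP=> nxy.
have hyx : le y x by case/orP: (htot x y) => // hxy; rewrite hxy in nxy.
have : (#|[set z | le z y]| < #|[set z | le z x]|)%N.
  apply: proper_card; apply/properP; split.
    by apply/subsetP=> z; rewrite !inE => hz; exact: ht hz hyx.
  by exists x; rewrite !inE ?hr.
by rewrite ltnNge h.
Qed.

Lemma card_block (k n : nat) (i : 'I_k) :
  #|[set m : 'I_(k * n) | in_block i m]| = n.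
Proof.
have lt : forall x : 'I_n, (i * n + x < k * n)%N.
  move=> x; have := ltn_ord x; have := ltn_ord i => hi hx.
  apply: (@leq_trans (i * n + n)); first by rewrite ltn_add2l.
  by rewrite -[X in (_ + X <= _)%N]mul1n -mulnDl addn1 leq_mul2r hi orbT.
pose f := fun x : 'I_n => Ordinal (lt x).
have finj : injective f by move=> a b [] /eqP; rewrite eqn_add2l => /eqP /val_inj.
rewrite -[RHS](card_ord n) -(card_imset _ finj); congr #|pred_of_set _|.
apply/setP=> m; rewrite !inE /in_block; apply/idP/imsetP.
  case/andP=> h1 h2; have hx : (m - i * n < n)%N by rewrite ltn_subLR // addnC.
  by exists (Ordinal hx) => //; apply: val_inj; rewrite /= subnKC.
by case=> x _ ->; rewrite /= leq_addr ltn_add2l ltn_ord.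
Qed.

Lemma card_F (k n : nat) :
  #|[set s : {ffun 'I_k -> 'I_(k * n)} | [forall j, in_block j (s j)]]| = (n ^ k)%N.
Proof.
have -> : #|[set s : {ffun 'I_k -> 'I_(k * n)} | [forall j, in_block j (s j)]]|
  = #|family (fun j => mem [set m : 'I_(k * n) | in_block j m])|.
  by apply: eq_card => s; rewrite !inE; apply: eq_forallb => j; rewrite inE.
rewrite card_family foldrE big_map big_enum /=.
rewrite (eq_bigr (fun _ => n)) ?prod_nat_const ?card_ord // => j _.
by rewrite card_block.
Qed.

Local Open Scope ring_scope.

Theorem lemma5p6 (R : realFieldType) (k n : nat) (gamma : R)
  (lek : rel 'I_k) (le : rel 'I_(k * n)) :
  (0 < k)%N -> (0 < n)%N -> 0 < gamma ->
  quasi_order lek -> quasi_order le ->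
  gamma * k%:R * n%:R ^+ k <= #|good_tuples lek le|%:R ->
  exists S : 'I_k -> {set 'I_(k * n)},
    (forall i, forall m, m \in S i -> @in_block k n i m) /\
    (forall i, gamma * n%:R <= #|S i|%:R) /\
    (forall s : 'I_k -> 'I_(k * n), (forall i, s i \in S i) ->
       forall i j, le (s i) (s j) = lek i j).
Proof.
move=> k0 n0 g0 qk ql hcard.
set rho := fun m : 'I_(k * n) => #|[set z | le z m]|.
set kap := fun i : 'I_k => #|[set z | lek z i]|.
have hle : forall x y, le x y = (rho x <= rho y)%N := rank_le ql.
have hlek : forall x y, lek x y = (kap x <= kap y)%N := rank_le qk.
set B := fun i : 'I_k => [set m : 'I_(k * n) | in_block i m].
set gn := gamma * n%:R.
set G := good_tuples lek le.
have goodP : forall s : {ffun 'I_k -> 'I_(k * n)}, s \in G ->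
    (forall j, s j \in B j) /\
    (forall i j, (rho (s i) <= rho (s j))%N = (kap i <= kap j)%N).
  move=> s; rewrite inE => /andP [/forallP hb /forallP hr]; split => [j|i j].
    by rewrite inE.
  by rewrite -hle -hlek; move: (hr i) => /forallP /(_ j) /eqP.
pose lo := fun (s : {ffun 'I_k -> 'I_(k * n)}) (i : 'I_k) =>
  (\max_(j | (kap j < kap i)%N) (rho (s j)).+1)%N.
have lo_good : forall s i, s \in G -> (lo s i <= rho (s i))%N.
  move=> s i sG; apply/bigmax_leqP => j hj.
  by rewrite ltnNge (goodP s sG).2 -ltnNge.
pose pk := fun i : 'I_k => [pick j | (j != i) && (kap j == kap i)].
pose Sset := fun (s : {ffun 'I_k -> 'I_(k * n)}) i =>
  if pk i is Some _ then [set x in B i | rho x == rho (s i)]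
  else [set x in B i | (lo s i <= rho x <= rho (s i))%N].
pose A := fun (s : {ffun 'I_k -> 'I_(k * n)}) i p => [set x in B i | rho x == rho (s p)].
pose Zset := fun (s : {ffun 'I_k -> 'I_(k * n)}) i =>
  if pk i is Some p then (if #|A s i p|%:R < gn then A s i p else set0)
  else [set x in B i | (lo s i <= rho x)%N &&
            (#|[set y in B i | (lo s i <= rho y <= rho x)%N]|%:R < gn)].
case: (boolP [exists s in G, [forall i, gn <= #|Sset s i|%:R]]).
  case/existsP=> s /andP [sG /forallP hS].
  exists (Sset s); split.
    move=> i m; rewrite /Sset; case: (pk i) => [_|]; rewrite inE => /andP[];
    by rewrite inE.
  split; first by move=> i; exact: hS.
  move=> t ht.
  have f1 : forall j, (lo s j <= rho (t j))%N && (rho (t j) <= rho (s j))%N.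
    move=> j; move: (ht j); rewrite /Sset; case: (pk j) => [_|]; rewrite inE => /andP[_] //.
    by move/eqP ->; rewrite leqnn lo_good.
  have f2 : forall j l, l != j -> kap l = kap j -> rho (t j) = rho (s j).
    move=> j l hlj hk; move: (ht j); rewrite /Sset /pk; case: pickP => [p _|/(_ l)].
      by rewrite inE => /andP[_ /eqP].
    by rewrite hlj hk eqxx.
  move=> i j; rewrite hle hlek.
  case: (ltngtP (kap i) (kap j)) => hij.
  - have h1 : (rho (s i) < lo s j)%N := @leq_bigmax_cond _ (fun l => kap l < kap j)%N (fun l => (rho (s l)).+1) i hij.
    apply: (leq_trans (proj2 (andP (f1 i)))).
    exact: leq_trans (ltnW h1) (proj1 (andP (f1 j))).
  - have h1 : (rho (s j) < lo s i)%N := @leq_bigmax_cond _ (fun l => kap l < kap i)%N (fun l => (rho (s l)).+1) j hij.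
    apply/negbTE; rewrite -ltnNge.
    apply: (leq_ltn_trans (proj2 (andP (f1 j)))).
    exact: leq_trans h1 (proj1 (andP (f1 i))).
  - case: (eqVneq i j) => [->|nij]; first by rewrite leqnn.
    rewrite (f2 i j) 1?eq_sym // (f2 j i) //.
    by rewrite (goodP s sG).2 hij leqnn.
rewrite negb_exists => /forallP none.
have hbad : forall s, s \in G -> exists i, s i \in Zset s i.
  move=> s sG; move: (none s); rewrite sG /= negb_forall => /existsP [i].
  rewrite -ltNge => hi.
  exists i; have [hb hr] := goodP s sG.
  move: hi; rewrite /Zset /Sset /A /pk; case: pickP => [p /andP [hp /eqP hk] | _] hi.
    have e : rho (s p) = rho (s i) by apply/eqP; rewrite eqn_leq !hr hk leqnn.
    rewrite e ifT //; by rewrite inE hb eqxx.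
  by rewrite inE hb lo_good.
have gn0 : 0 < gn by rewrite mulr_gt0 // ltr0n.
have Zsmall : forall s i, #|Zset s i|%:R < gn.
  move=> s i; rewrite /Zset; case: (pk i) => [p|].
    by case: ifP => // _; rewrite cards0.
  set Z := [set x in B i | _].
  case: (set_0Vmem Z) => [->|[x0 hx0]]; first by rewrite cards0.
  case: (@arg_maxnP _ x0 (fun x => x \in Z) rho hx0) => xm hxm hmax.
  have hc : #|[set y in B i | (lo s i <= rho y)%N & (rho y <= rho xm)%N]|%:R < gn.
    by move: hxm; rewrite inE => /and3P [_ _ ->].
  apply: le_lt_trans hc.
  rewrite ler_nat; apply: subset_leq_card; apply/subsetP => y hy.
  have := hmax y hy; move: hy; rewrite !inE => /andP [-> /andP [-> _]] /= ->.
  by [].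
have hZ : forall i (s s' : {ffun 'I_k -> 'I_(k * n)}),
    (forall j, j != i -> s j = s' j) -> Zset s i = Zset s' i.
  move=> i s s' h.
  have hlo : lo s i = lo s' i.
    apply: eq_bigr => j hj; rewrite h //; apply: contraTneq hj => ->.
    by rewrite ltnn.
  rewrite /Zset /A /pk hlo; case: pickP => [p /andP[hp _]|_] //.
  by rewrite (h p hp).
have [s0 s0G] : exists s0, s0 \in G.
  apply/card_gt0P; rewrite -(ltr0n R); apply: lt_le_trans hcard.
  by rewrite !mulr_gt0 // ?ltr0n // exprn_gt0 // ltr0n.
pose E := fun i => [set s : {ffun 'I_k -> 'I_(k * n)} |
                      [forall j, s j \in B j] && (s i \in Zset s i)].
have hn : 0 < (n%:R : R) by rewrite ltr0n.
have hE : forall i, #|E i|%:R < gamma * n%:R ^+ k.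
  move=> i.
  have hc : (#|E i| * #|B i| <= \sum_(s : {ffun 'I_k -> 'I_(k*n)} | [forall j, s j \in B j])
               #|Zset s i|)%N.
    apply: count_fix => s x; apply: hZ => j hj; by rewrite ffunE (negbTE hj).
  have hB : #|B i| = n by exact: card_block.
  rewrite hB in hc.
  have hF : forall s, s \in G -> [forall j, s j \in B j].
    by move=> s /goodP [h _]; apply/forallP.
  have hlt : (\sum_(s : {ffun 'I_k -> 'I_(k*n)} | [forall j, s j \in B j]) (#|Zset s i|%:R : R))
       < \sum_(s : {ffun 'I_k -> 'I_(k*n)} | [forall j, s j \in B j]) gn.
    apply: ltr_sum => [|s _]; last exact: Zsmall.
    by apply/hasP; exists s0; [rewrite mem_index_enum | exact: hF].
  have hsum : \sum_(s : {ffun 'I_k -> 'I_(k*n)} | [forall j, s j \in B j]) gn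
              = gn * (n ^ k)%:R.
    rewrite -(card_F k n) mulr_natr -sumr_const; apply: eq_bigl => s.
    by rewrite !inE; apply: eq_forallb => j; rewrite inE.
  move: hc; rewrite -(ler_nat R) natrM natr_sum => hc.
  have := le_lt_trans hc hlt; rewrite hsum /gn natrX => h.
  by rewrite -(ltr_pM2r hn); move: h; rewrite mulrAC.
have hGE : (#|G| <= \sum_i #|E i|)%N.
  rewrite -sum1_card.
  apply: (@leq_trans (\sum_(s in G) \sum_i ((s \in E i) : nat))).
    apply: leq_sum => s sG; have [i hi] := hbad s sG.
    rewrite (bigD1 i) //= (_ : s \in E i) ?leq_addr //.
    rewrite inE hi andbT; apply/forallP => j; exact: (goodP s sG).1.
  rewrite exchange_big /=; apply: leq_sum => i _.
  rewrite -sum1_card [X in (X <= _)%N]big_mkcond [X in (_ <= X)%N]big_mkcond /=.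
  by apply: leq_sum => s _; case: (s \in G); case: (s \in E i).
have : (#|G|%:R : R) < gamma * k%:R * n%:R ^+ k.
  apply: (@le_lt_trans _ _ (\sum_i (#|E i|%:R : R))); first by rewrite -natr_sum ler_nat.
  apply: (@lt_le_trans _ _ (\sum_(i : 'I_k) gamma * n%:R ^+ k)).
    apply: ltr_sum => [|i _]; last exact: hE.
    by apply/hasP; exists (Ordinal k0); rewrite ?mem_index_enum.
  by rewrite sumr_const card_ord mulrAC mulr_natr.
by move=> h; move: (lt_le_trans h hcard); rewrite ltxx.
Qed.
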